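(* Let $m\ge 1$ and let $F_0=[1,m-1]\supseteq F_1\supseteq F_2$ be sets such that $G=F_0\cup(m+F_1)\cup(2m+F_2)$ is a gapset; let $g=|F_0|+|F_1|+|F_2|$ (the genus of $G$). Define $$\alpha_1(F)=(F_0\sqcup\{m\},F_1,F_2),\qquad \alpha_2(F)=(F_0\sqcup\{m\},F_1\sqcup\{m\},F_2).$$ Then $\alpha_1(F)$ and $\alpha_2(F)$ are gapset filtrations of multiplicity $m+1$ and depth at most $3$, of genus $g+1$ and $g+2$ respectively; that is, $H=[1,m]\cup((m+1)+F_1)\cup(2(m+1)+F_2)$ is a gapset of genus $g+1$ and $H\cup\{2m+1\}$ is a gapset of genus $g+2$.
   Context: A gapset is a finite set $G \subset \mathbb{N}_+$ such that for all $z \in G$, whenever $z=x+y$ with $x,y\in\mathbb{N}_+$, we have $x\in G$ or $y\in G$. Its multiplicity is the least $m\ge1$ with $m\notin G$, its genus is $|G|$, and its depth is $\lceil c/m\rceil$ where $c=\max G+1$ ($c=0$ if $G=\emptyset$). For $m\ge1$, an $m$-filtration is a finite sequence $(F_0,\dots,F_t)$ of sets with $F_0=[1,m-1]\supseteq F_1\supseteq\dots\supseteq F_t$; it is called a gapset filtration if $\tau(F)=\bigcup_i (im+F_i)$ is a gapset; the multiplicity, genus and depth of the gapset filtration are those of $\tau(F)$ (so the genus is $\sum_i|F_i|$ and the multiplicity is $m$). Here $[a,b]=\{z\in\mathbb{Z}:a\le z\le b\}$ and $k+A=\{k+a:a\in A\}$. *)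

(* Defs.v *)
From mathcomp Require Import all_boot all_order.
From mathcomp Require Import finmap.
Set Implicit Arguments. Unset Strict Implicit. Unset Printing Implicit Defensive.
Local Open Scope fset_scope.

Definition interval (a b : nat) : {fset nat} := [fset z in iota a (b.+1 - a)].

Definition shift (k : nat) (A : {fset nat}) : {fset nat} := [fset (k + x)%N | x in A].

Definition is_gapset (G : {fset nat}) : Prop :=
  (forall z, z \in G -> 0 < z) /\
  (forall z x y, z \in G -> 0 < x -> 0 < y -> z = (x + y)%N -> x \in G \/ y \in G).

Definition is_multiplicity (G : {fset nat}) (m : nat) : Prop :=
  [/\ 1 <= m, m \notin G & forall k, 1 <= k < m -> k \in G].

Definition genus (G : {fset nat}) : nat := #|` G|.

Definition conductor (G : {fset nat}) : nat :=
  if G == fset0 then 0 else (\max_(x <- G) x).+1.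

(* depth = ceil(c / m) *)
Definition depth (G : {fset nat}) (m : nat) : nat := (conductor G + m.-1)%N %/ m.

Definition is_m_filtration (m : nat) (F : seq {fset nat}) : Prop :=
  [/\ 0 < size F, nth fset0 F 0 = interval 1 m.-1 &
      forall i, i.+1 < size F -> nth fset0 F i.+1 `<=` nth fset0 F i].

Definition tau (m : nat) (F : seq {fset nat}) : {fset nat} :=
  \big[fsetU/fset0]_(i < size F) shift (i * m)%N (nth fset0 F i).

Definition is_gapset_filtration (m : nat) (F : seq {fset nat}) : Prop :=
  is_m_filtration m F /\ is_gapset (tau m F).

(* Main.v *)
Require Import Defs.
From mathcomp Require Import all_boot all_order.
From mathcomp Require Import finmap.
From mathcomp Require Import zify.
Local Open Scope fset_scope.
Local Open Scope nat_scope.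

Lemma mem_interval a b z : (z \in interval a b) = (a <= z <= b).
Proof. rewrite /interval in_fset /= mem_iota. apply/idP/idP; lia. Qed.

Lemma mem_shift k A z : (z \in shift k A) = (k <= z) && (z - k \in A).
Proof.
apply/imfsetP/idP => /=.
  by case=> x xA ->; rewrite leq_addr addKn xA.
case/andP=> kz zA; exists (z - k) => //; lia.
Qed.

Lemma tau3 k A B C z : (z \in tau k [:: A; B; C]) =
  [|| z \in A, z \in shift k B | z \in shift (2 * k) C].
Proof.
rewrite /tau /= !big_ord_recl big_ord0 /= !in_fsetU in_fset0 orbF.
rewrite !mem_shift /= mul0n mul1n subn0. done.
Qed.


Lemma card_shift k A : #|` shift k A| = #|` A|.
Proof. by rewrite /shift card_imfset /=; last exact: addnI. Qed.

Lemma card_disj (A B : {fset nat}) : (forall z, z \in A -> z \in B -> False) ->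
  #|` A `|` B| = #|` A| + #|` B|.
Proof.
move=> H; have := cardfsUI A B.
have -> : A `&` B = fset0.
  apply/fsetP => z; rewrite in_fsetI in_fset0.
  by apply/negbTE/negP => /andP[/H hA /hA].
by rewrite cardfs0 addn0.
Qed.

Lemma tau3E k A B C : tau k [:: A; B; C] = A `|` shift k B `|` shift (2 * k) C.
Proof. by apply/fsetP => z; rewrite tau3 !in_fsetU orbA. Qed.

Section Gen.
Variables (m : nat) (A F1 F2 : {fset nat}).
Hypothesis hm : 1 <= m.
Hypothesis HA : forall z, (z \in A) = (1 <= z <= m).
Hypothesis H1 : forall f, f \in F1 -> 1 <= f <= m.
Hypothesis H2 : forall f, f \in F2 -> 1 <= f <= m.-1.
Hypothesis H21 : forall f, f \in F2 -> f \in F1.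
Hypothesis Hsplit : forall a b, 0 < a -> 0 < b -> a + b \in F2 -> a \in F1 \/ b \in F1.

Lemma gen_bound z : z \in tau m.+1 [:: A; F1; F2] -> 0 < z <= 3 * m + 1.
Proof.
rewrite tau3 !mem_shift HA; case/or3P; first lia.
  by case/andP=> h1 /H1; lia.
by case/andP=> h1 /H2; lia.
Qed.

Lemma gen_gapset : is_gapset (tau m.+1 [:: A; F1; F2]).
Proof.
split; first by move=> z /gen_bound; lia.
move=> z x y hz hx hy ez; subst z.
rewrite !tau3 !mem_shift !HA.
have [xm|xm] := leqP x m.
  by left; apply/or3P; apply: Or31; lia.
have [ym|ym] := leqP y m.
  by right; apply/or3P; apply: Or31; lia.
move: hz; rewrite tau3 !mem_shift HA; case/or3P; first lia.
  by case/andP=> h1 /H1; lia.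
case/andP=> h1 hf.
have [ex|nx] := eqVneq x m.+1.
  right; apply/or3P; apply: Or32; apply/andP; split; first lia.
  by apply: H21; have <- : x + y - 2 * m.+1 = y - m.+1 by lia.
have [ey|ny] := eqVneq y m.+1.
  left; apply/or3P; apply: Or32; apply/andP; split; first lia.
  by apply: H21; have <- : x + y - 2 * m.+1 = x - m.+1 by lia.
have e : x + y - 2 * m.+1 = (x - m.+1) + (y - m.+1) by lia.
rewrite e in hf.
have [a0 b0] : 0 < x - m.+1 /\ 0 < y - m.+1 by lia.
case: (Hsplit _ _ a0 b0 hf) => h.
  by left; apply/or3P; apply: Or32; apply/andP; split; first lia.
by right; apply/or3P; apply: Or32; apply/andP; split; first lia.
Qed.

Lemma gen_mult : is_multiplicity (tau m.+1 [:: A; F1; F2]) m.+1.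
Proof.
split => //.
  rewrite tau3 !mem_shift HA subnn; apply/negP; case/or3P; first lia.
    by case/andP=> _ /H1.
  by case/andP; lia.
by move=> k hk; rewrite tau3 HA; apply/or3P; apply: Or31; lia.
Qed.

Lemma gen_depth : depth (tau m.+1 [:: A; F1; F2]) m.+1 <= 3.
Proof.
have hc : conductor (tau m.+1 [:: A; F1; F2]) <= 3 * m + 2.
  rewrite /conductor; case: ifP => // _.
  have : \max_(x <- tau m.+1 [:: A; F1; F2]) x <= 3 * m + 1.
    by apply/bigmax_leqP_seq => i /gen_bound; lia.
  lia.
rewrite /depth -ltnS ltn_divLR //; lia.
Qed.

Lemma gen_genus : #|` tau m.+1 [:: A; F1; F2]| = #|` A| + #|` F1| + #|` F2|.
Proof.
rewrite tau3E card_disj; last first.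
  move=> z; rewrite in_fsetU !mem_shift HA.
  by move=> /orP[h|/andP[h1 /H1 h2]] /andP[h3 /H2 h4]; lia.
rewrite card_disj; last first.
  by move=> z; rewrite !mem_shift HA => h /andP[h3 /H1 h4]; lia.
by rewrite !card_shift.
Qed.

End Gen.


Local Open Scope fset_scope.

Theorem mainTheorem11 (m : nat) (F0 F1 F2 : {fset nat}) :
  1 <= m ->
  F0 = interval 1 m.-1 -> F1 `<=` F0 -> F2 `<=` F1 ->
  is_gapset (F0 `|` shift m F1 `|` shift (2 * m)%N F2) ->
  let g := (#|` F0| + #|` F1| + #|` F2|)%N in
  let a1 := [:: F0 `|` [fset m]; F1; F2] in
  let a2 := [:: F0 `|` [fset m]; F1 `|` [fset m]; F2] in
  [/\ is_gapset_filtration m.+1 a1,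
      is_multiplicity (tau m.+1 a1) m.+1,
      depth (tau m.+1 a1) m.+1 <= 3,
      genus (tau m.+1 a1) = g.+1 &
   [/\ is_gapset_filtration m.+1 a2,
      is_multiplicity (tau m.+1 a2) m.+1,
      depth (tau m.+1 a2) m.+1 <= 3 &
      genus (tau m.+1 a2) = g.+2]].
Proof.
move=> hm eF0 s10 s21 hG g a1 a2.
have hF0 z : (z \in F0) = (1 <= z <= m.-1)%N by rewrite eF0 mem_interval.
have hA z : (z \in F0 `|` [fset m]) = (1 <= z <= m)%N.
  by rewrite in_fsetU in_fset1 hF0; apply/idP/idP; lia.
have hF1 f : f \in F1 -> (1 <= f <= m.-1)%N by move/(fsubsetP s10); rewrite hF0.
have hF2 f : f \in F2 -> (1 <= f <= m.-1)%N by move/(fsubsetP s21)/hF1.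
have hF1' f : f \in F1 `|` [fset m] -> (1 <= f <= m)%N.
  by rewrite in_fsetU in_fset1 => /orP[/hF1|/eqP->]; lia.
have hF1m f : f \in F1 -> (1 <= f <= m)%N by move/hF1; lia.
have hsplit a b : 0 < a -> 0 < b -> (a + b)%N \in F2 -> a \in F1 \/ b \in F1.
  move=> ha hb hab.
  have := hG.2 (2 * m + (a + b))%N (m + a)%N (m + b)%N.
  rewrite !in_fsetU !mem_shift !hF0.
  have hz : (2 * m <= 2 * m + (a + b))%N && (2 * m + (a + b) - 2 * m \in F2).
    by rewrite addKn hab leq_addr.
  rewrite hz orbT => /(_ isT) []; try lia.
  - rewrite !addKn => /orP[/orP[h|/andP[_ h]]|/andP[h _]]; by first [by left | by right | by move: (hF2 _ hab); lia | lia].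
  - rewrite !addKn => /orP[/orP[h|/andP[_ h]]|/andP[h _]]; by first [by left | by right | by move: (hF2 _ hab); lia | lia].
have hsplit' a b : 0 < a -> 0 < b -> (a + b)%N \in F2 ->
    a \in F1 `|` [fset m] \/ b \in F1 `|` [fset m].
  move=> ha hb hab; rewrite !in_fsetU.
  by case: (hsplit a b ha hb hab) => ->; [left|right].
have h21' f : f \in F2 -> f \in F1 `|` [fset m].
  by move/(fsubsetP s21); rewrite in_fsetU => ->.
have h21 f : f \in F2 -> f \in F1 by move/(fsubsetP s21).
have hF2' f : f \in F2 -> (1 <= f <= m.-1)%N by apply: hF2.
have cm : #|` F0 `|` [fset m]| = (#|` F0|).+1.
  rewrite fsetUC cardfsU1 hF0.
  by have -> : (0 < m <= m.-1)%N = false by lia.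
have c1 : #|` F1 `|` [fset m]| = (#|` F1|).+1.
  rewrite fsetUC cardfsU1; case: (boolP (m \in F1)) => [/hF1|//]; lia.
split; [split| | | |split; [split| | | ]].
- split => //; first by apply/fsetP => z; rewrite hA mem_interval.
  case=> [|[|]] //= _.
  exact: fsubset_trans s10 (fsubsetUl _ _).
- exact: gen_gapset.
- exact: gen_mult.
- exact: gen_depth.
- by rewrite /genus (@gen_genus m _ F1 F2 hm hA hF1m hF2) cm /g; lia.
- split => //; first by apply/fsetP => z; rewrite hA mem_interval.
  case=> [|[|]] //= _; last exact: fsubset_trans s21 (fsubsetUl _ _).
  apply/fsubsetP => z; rewrite !in_fsetU => /orP[/(fsubsetP s10) -> //|->].
  by rewrite orbT.
- exact: gen_gapset.
- exact: gen_mult.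
- exact: gen_depth.
- by rewrite /genus (@gen_genus m _ _ F2 hm hA hF1' hF2) cm c1 /g; lia.
Qed.
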